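(* Let $\Gamma$ be a free group on two generators $\xi,\eta$ and let $k\ge 2$. Let $\Psi^k$ be the set of reduced words of length exactly $k$. Call a pair $(\gamma,\psi)$ a group-theoretical relation of level $k$ if $\gamma\in\Gamma\setminus\{1\}$ has reduced length $|\gamma|\le k$, $\psi\in\Psi^k$, and the reduced length of the product satisfies $|\gamma\psi|\le k$. Then the number of group-theoretical relations of level $k$ equals $R_k=4\cdot r_k\cdot 3^{k-1}$, where $$r_k=1+\sum_{i=1}^{k-1}\Bigl(1+2\sum_{j=1}^{\min\{i,k-i\}}3^{j-1}\Bigr),$$ and equivalently $r_k=\sum_{j=0}^{k}a_j$ with $a_0=a_1=1$, $a_j=1+2\sum_{i=1}^{\lfloor j/2\rfloor}3^{i-1}$ for $2\le j\le k-1$, and $a_k=2\sum_{i=1}^{\lfloor k/2\rfloor}3^{i-1}$.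
   Context: $|w|$ denotes the length of the reduced word representing $w$ in the free basis $\{\xi,\eta\}$. (For example, for $k=2$ there are $48$ such relations.) *)

(* Defs.v *)
From mathcomp Require Import all_boot.
Set Implicit Arguments. Unset Strict Implicit. Unset Printing Implicit Defensive.

(* Letters of the free group on two generators xi, eta:
   (false,false) = xi, (false,true) = xi^-1, (true,false) = eta, (true,true) = eta^-1. *)
Definition letter := (bool * bool)%type.
Definition linv (x : letter) : letter := (x.1, ~~ x.2).

Fixpoint reduced (w : seq letter) : bool :=
  match w with
  | x :: ((y :: _) as t) => (y != linv x) && reduced t
  | _ => true
  end.

Definition fred (w : seq letter) : seq letter :=
  foldr (fun x acc => match acc with
                      | y :: t => if y == linv x then t else x :: acc
                      | [::] => [:: x]
                      end) [::] w.

Definition gmul (g p : seq letter) : seq letter := fred (g ++ p).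

Definition is_rel (k : nat) (g p : seq letter) : bool :=
  [&& reduced g, g != [::], size g <= k,
      reduced p, size p == k & size (gmul g p) <= k].

(* Number of relations of level k; gamma ranges over words of length l, 1 <= l <= k,
   psi over words of length k (tuples make the sets finite). *)
Definition num_rel (k : nat) : nat :=
  \sum_(1 <= l < k.+1)
     #|[set gp : l.-tuple letter * k.-tuple letter | is_rel k (tval gp.1) (tval gp.2)]|.

Definition r_k (k : nat) : nat :=
  1 + \sum_(1 <= i < k) (1 + 2 * \sum_(1 <= j < (minn i (k - i)).+1) 3 ^ (j - 1)).

Definition a_j (k j : nat) : nat :=
  if j <= 1 then 1
  else if j < k then 1 + 2 * \sum_(1 <= i < (j./2).+1) 3 ^ (i - 1)
  else 2 * \sum_(1 <= i < (k./2).+1) 3 ^ (i - 1).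

(* Main.v *)
Require Import Defs.
From mathcomp Require Import all_boot zify.
Set Implicit Arguments. Unset Strict Implicit.

Definition step (x : letter) (acc : seq letter) :=
  match acc with
  | y :: t => if y == linv x then t else x :: acc
  | [::] => [:: x]
  end.

Fixpoint lcp (u q : seq letter) : nat :=
  match u, q with
  | x :: u', y :: q' => if x == y then (lcp u' q').+1 else 0
  | _, _ => 0
  end.

Lemma linvK : involutive linv.
Proof. by case=> a b; rewrite /linv /= negbK. Qed.

Lemma linv_sym x y : (y == linv x) = (x == linv y).
Proof.
by apply/eqP/eqP => ->; rewrite linvK.
Qed.

Definition R (x y : letter) := y != linv x.

Lemma reduced_sorted s : reduced s = sorted R s.
Proof. by elim: s => // x [|y s] //= ->. Qed.

Lemma reduced_rev s : reduced (rev s) = reduced s.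
Proof.
rewrite !reduced_sorted rev_sorted; case: s => //= x s.
by apply: eq_path => a b; rewrite /R linv_sym.
Qed.

Lemma reduced_map s : reduced (map linv s) = reduced s.
Proof.
elim: s => // x [|y s] //= ->.
by rewrite (inj_eq (can_inj linvK)).
Qed.

Definition okz (z : letter) (s : seq letter) := if s is y :: _ then y != z else true.

Lemma reduced_cons x s : reduced (x :: s) = okz (linv x) s && reduced s.
Proof. by case: s. Qed.

Lemma fred_red b : reduced b -> fred b = b.
Proof.
elim: b => // x b IH; rewrite reduced_cons => /andP[hx hb].
rewrite /fred /= -/(fred b) IH //.
by case: b hx {IH hb} => //= y t /negbTE ->.
Qed.

Lemma fred_cat a b : reduced b -> fred (a ++ b) = foldr step b a.
Proof. by move=> hb; rewrite /fred foldr_cat -/(fred b) fred_red. Qed.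

Lemma lcp_head0 x ra s : reduced (x :: ra) -> lcp ra (linv x :: s) = 0.
Proof. by case: ra => //= y ra /andP[/negbTE -> _]. Qed.

Lemma size_fold ra b : reduced ra -> reduced b ->
  size (foldr step b (rev ra)) + 2 * lcp ra (map linv b) = size ra + size b.
Proof.
elim: ra b => [|x ra IH] b hra hb.
  by rewrite /= addn0.
rewrite rev_cons foldr_rcons.
have hra' : reduced ra by move: hra; rewrite reduced_cons => /andP[].
case: b hb => [|y t] hb.
  have := IH [:: x] hra' is_true_true.
  by rewrite /= (lcp_head0 _ hra) /=; lia.
have ht : reduced t by move: hb; rewrite reduced_cons => /andP[].
rewrite /=.
case: ifP => hy.
  have := IH t hra' ht.
  rewrite (eqP hy) linvK eqxx /=; lia.
have hxb : reduced (x :: y :: t) by rewrite /= hy.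
have := IH (x :: y :: t) hra' hxb.
rewrite /= (lcp_head0 _ hra).
have -> : (x == linv y) = false by rewrite -linv_sym hy.
simpl; lia.
Qed.

Lemma size_gmul u q : reduced u -> reduced q ->
  size (gmul (rev u) (map linv q)) + 2 * lcp u q = size u + size q.
Proof.
move=> hu hq; rewrite /gmul fred_cat ?reduced_map //.
have hq' : reduced (map linv q) by rewrite reduced_map.
have := size_fold hu hq'.
by rewrite (mapK linvK) size_map.
Qed.
Lemma sum_tuple0 (T : finType) (F : seq T -> nat) :
  \sum_(t : 0.-tuple T) F t = F [::].
Proof. by rewrite (big_pred1 [tuple]) // => t; apply/esym/eqP; exact: tuple0. Qed.

Lemma sum_tupleS (T : finType) n (F : seq T -> nat) :
  \sum_(t : n.+1.-tuple T) F t = \sum_(x : T) \sum_(t : n.-tuple T) F (x :: t).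
Proof.
rewrite pair_big /=.
rewrite (reindex (fun p : T * n.-tuple T => [tuple of p.1 :: p.2])) /=.
  by apply: eq_bigr => -[x t].
exists (fun t : n.+1.-tuple T => (thead t, [tuple of behead t])) => [[x t] _|t _].
  by congr pair; apply: val_inj.
by rewrite [t]tuple_eta; apply: val_inj.
Qed.

Lemma card_letter : #|{: letter}| = 4.
Proof. by rewrite card_prod card_bool. Qed.

Lemma sum_neq (z : letter) c : \sum_(x : letter) (x != z) * c = 3 * c.
Proof.
transitivity (\sum_(x : letter) if x != z then c else 0).
  by apply: eq_bigr => x _; rewrite mulnbl.
by rewrite -big_mkcond /= sum_nat_const cardC1 card_letter.
Qed.

Lemma countA n z : \sum_(u : n.-tuple letter) (okz z u && reduced u) = 3 ^ n.
Proof.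
elim: n z => [|n IH] z; first by rewrite (sum_tuple0 (fun s => nat_of_bool (okz z s && reduced s))).
rewrite (sum_tupleS _ (fun s => nat_of_bool (okz z s && reduced s))).
transitivity (\sum_(x : letter) (x != z) * 3 ^ n); last by rewrite sum_neq expnS.
apply: eq_bigr => x _; rewrite -(IH (linv x)) big_distrr /=.
apply: eq_bigr => u _; rewrite mulnb.
by case: (val u).

Qed.

Lemma sum_pick (F : letter -> letter -> nat) :
  (forall x y, x != y -> F x y = 0) ->
  \sum_(x : letter) \sum_(y : letter) F x y = \sum_(x : letter) F x x.
Proof.
move=> h; apply: eq_bigr => x _.
rewrite (bigD1 x) //= big1 ?addn0 // => y hy; apply: h; by rewrite eq_sym.
Qed.

Lemma countE m : forall l k z, m <= l -> m <= k ->
  \sum_(u : l.-tuple letter) \sum_(q : k.-tuple letter)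
     [&& okz z u, reduced u, okz z q, reduced q & m <= lcp u q] = 3 ^ (l + k - m).
Proof.
elim: m => [|m IH] l k z hl hk.
  rewrite subn0 expnD -(countA l z) -(countA k z) big_distrl /=.
  apply: eq_bigr => u _; rewrite big_distrr /=; apply: eq_bigr => q _.
  by rewrite mulnb !andbA andbT.
case: l hl => [|l] // hl; case: k hk => [|k] // hk.
rewrite (sum_tupleS _ (fun s => \sum_(q : k.+1.-tuple letter) nat_of_bool
   [&& okz z s, reduced s, okz z q, reduced q & m < lcp s q])).
under eq_bigr => x _ do under eq_bigr => u _ do rewrite (sum_tupleS _ (fun s => nat_of_bool
   [&& okz z (x :: u), reduced (x :: u), okz z s, reduced s & m < lcp (x :: u) s])).
under eq_bigr => x _ do rewrite exchange_big /=.
have -> : 3 ^ (l.+1 + k.+1 - m.+1) = 3 * 3 ^ (l + k - m).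
  by rewrite -expnS; congr (_ ^ _); lia.
rewrite -(sum_neq z).
rewrite (@sum_pick (fun x y => \sum_(i : l.-tuple letter) \sum_(j : k.-tuple letter)
   [&& okz z (x :: i), reduced (x :: i), okz z (y :: j), reduced (y :: j)
     & m < lcp (x :: i) (y :: j)])).
  apply: eq_bigr => x _; rewrite -(IH l k (linv x)) // big_distrr.
  apply: eq_bigr => u _; rewrite big_distrr; apply: eq_bigr => q _.
  rewrite !reduced_cons [lcp _ _]/= eqxx ltnS.
  rewrite /= mulnb; by case: (x != z); case: (okz _ u); case: (okz _ q); case: (reduced u); case: (reduced q).
move=> x y hxy; apply: big1 => u _; apply: big1 => q _.
by rewrite /= (negbTE hxy) !andbF.
Qed.

Lemma countD m l k : 0 < m -> m <= l -> m <= k ->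
  \sum_(u : l.-tuple letter) \sum_(q : k.-tuple letter)
     [&& reduced u, reduced q & m <= lcp u q] = 4 * 3 ^ (l.-1 + k.-1 - m.-1).
Proof.
case: m => [|m] // _; case: l => [|l] // hl; case: k => [|k] // hk.
rewrite (sum_tupleS _ (fun s => \sum_(q : k.+1.-tuple letter) nat_of_bool
   [&& reduced s, reduced q & m < lcp s q])).
under eq_bigr => x _ do under eq_bigr => u _ do rewrite (sum_tupleS _ (fun s => nat_of_bool
   [&& reduced (x :: u), reduced s & m < lcp (x :: u) s])).
under eq_bigr => x _ do rewrite exchange_big /=.
rewrite (@sum_pick (fun x y => \sum_(i : l.-tuple letter) \sum_(j : k.-tuple letter)
   [&& reduced (x :: i), reduced (y :: j) & m < lcp (x :: i) (y :: j)])).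
  transitivity (\sum_(x : letter) 3 ^ (l + k - m)).
    apply: eq_bigr => x _; rewrite -(countE (linv x) (hl : m <= l) (hk : m <= k)).
    apply: eq_bigr => u _; apply: eq_bigr => q _.
    rewrite !reduced_cons [lcp _ _]/= eqxx ltnS.
    by rewrite !andbA.
  by rewrite sum_nat_const card_letter.
move=> x y hxy; apply: big1 => u _; apply: big1 => q _.
by rewrite /= (negbTE hxy) !andbF.
Qed.

Lemma rev_tuple_inj n : injective (@rev_tuple n letter).
Proof.
move=> a b /(congr1 val) /= /(congr1 rev); rewrite !revK; exact: val_inj.
Qed.

Lemma map_linv_inj n : injective (@map_tuple n _ _ linv).
Proof.
move=> a b /(congr1 val) /= /(congr1 (map linv)); rewrite !(mapK linvK); exact: val_inj.
Qed.

Lemma count_l l k : 0 < l <= k ->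
  #|[set gp : l.-tuple letter * k.-tuple letter | is_rel k gp.1 gp.2]| =
  4 * 3 ^ (k.-1 + l./2).
Proof.
case/andP=> hl hlk.
rewrite -sum1_card big_mkcond /=.
transitivity (\sum_(g : l.-tuple letter) \sum_(p : k.-tuple letter) nat_of_bool (is_rel k g p)).
  rewrite pair_big /=; apply: eq_bigr => -[g p] _; by rewrite inE.
rewrite (reindex_inj (@rev_tuple_inj l)) /=.
under eq_bigr => g _ do rewrite (reindex_inj (@map_linv_inj k)) /=.
have hm : 0 < uphalf l by rewrite uphalf_gt0.
have hml : uphalf l <= l by rewrite leq_uphalf_double -addnn leq_addr.
have -> : k.-1 + l./2 = l.-1 + k.-1 - (uphalf l).-1.
  have := odd_double_half l; rewrite uphalf_half -mul2n; lia.
rewrite -(countD hm hml (leq_trans hml hlk)).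
apply: eq_bigr => u _; apply: eq_bigr => q _.
rewrite /is_rel reduced_rev reduced_map size_rev size_map !size_tuple eqxx hlk.
have -> : (rev u != [::]) by rewrite -size_eq0 size_rev size_tuple -lt0n.
case hu: (reduced u) => //; case hq: (reduced q) => //=.
have := size_gmul hu hq; rewrite !size_tuple leq_uphalf_double -mul2n => h.
move: h; set s := size _; set c := lcp u q => h. case: (leqP s k) => h1; case: (leqP l (2 * c)) => h2 //; lia.
Qed.
Lemma geo n : 1 + 2 * \sum_(1 <= i < n.+1) 3 ^ (i - 1) = 3 ^ n.
Proof.
elim: n => [|n IH]; first by rewrite big_geq.
rewrite big_nat_recr //= expnS subn1 /=.
move: IH; set S := \sum_(_ <= _ < _) _; set x := 3 ^ n; lia.
Qed.

Definition rr k := \sum_(1 <= l < k.+1) 3 ^ l./2.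
Definition P k := \sum_(1 <= i < k) 3 ^ minn i (k - i).
Definition Q k := \sum_(2 <= l < k.+1) 3 ^ l./2.

Lemma P_rec k : P k.+3 = 3 * P k.+1 + 6.
Proof.
rewrite /P big_ltn // big_add1 /= big_nat_recr //=.
rewrite big_distrr /=.
have -> : \sum_(1 <= i < k.+1) 3 ^ minn i.+1 (k.+3 - i.+1) =
          \sum_(1 <= i < k.+1) 3 * 3 ^ minn i (k.+1 - i).
  apply: eq_big_nat => i hi; rewrite -expnS; congr (_ ^ _); lia.
have -> : minn k.+2 (k.+3 - k.+2) = 1 by lia.
have -> : minn 1 (k.+3 - 1) = 1 by lia.
lia.
Qed.

Lemma Q_rec k : Q k.+3 = 3 * Q k.+1 + 6.
Proof.
rewrite /Q big_ltn // big_ltn // -[4]/(2 + 2) big_addn.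
have -> : k.+4 - 2 = k.+2 by lia.
rewrite big_distrr /=.
have -> : \sum_(2 <= i < k.+2) 3 ^ (i + 2)./2 = \sum_(2 <= i < k.+2) 3 * 3 ^ i./2.
  apply: eq_big_nat => i hi; rewrite addn2 /= -expnS //.
lia.
Qed.

Lemma PQ k : P k.+1 = Q k.+1 /\ P k.+2 = Q k.+2.
Proof.
elim: k => [|k [IH1 IH2]].
  by split; rewrite /P /Q unlock.
by split => //; rewrite P_rec Q_rec IH1.
Qed.

Lemma rk_eq k : 0 < k -> r_k k = rr k.
Proof.
case: k => [|k] // _.
rewrite /r_k /rr [in RHS]big_ltn // /=.
have -> : \sum_(1 <= i < k.+1) (1 + 2 * \sum_(1 <= j < (minn i (k.+1 - i)).+1) 3 ^ (j - 1))
   = P k.+1 by apply: eq_bigr => i _; rewrite geo.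
by case: (PQ k) => -> _.
Qed.

Lemma aj_eq k : 2 <= k -> \sum_(0 <= j < k.+1) a_j k j = rr k.
Proof.
move=> hk; rewrite big_ltn // big_nat_recr; last by lia.
rewrite /rr big_nat_recr; last by lia.
have -> : \sum_(1 <= j < k) a_j k j = \sum_(1 <= l < k) 3 ^ l./2.
  apply: eq_big_nat => j /andP[h1 h2]; rewrite /a_j h2.
  case: ifP => hj; first by have -> : j = 1 by lia.
  by rewrite geo.
rewrite /a_j /= ltnn.
have -> : (k <= 1) = false by lia.
have := geo k./2; set S := \sum_(_ <= _ < _) _; set x := 3 ^ _; lia.
Qed.

Theorem lemma2p2 (k : nat) (hk : 2 <= k) :
  num_rel k = 4 * r_k k * 3 ^ (k - 1) /\ r_k k = \sum_(0 <= j < k.+1) a_j k j.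
Proof.
have hk0 : 0 < k by lia.
split; last by rewrite aj_eq // rk_eq.
rewrite /num_rel rk_eq //.
rewrite (eq_big_nat _ _ (F2 := fun l => 4 * 3 ^ k.-1 * 3 ^ l./2)); last first.
  by move=> l hl; rewrite (count_l (hl : 0 < l <= k)) expnD mulnA.
by rewrite -big_distrr /= -/(rr k) subn1 mulnAC.
Qed.
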